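(* Let $n\ge1$, identify $\mathbb{R}^{n+1}=\mathbb{R}^n\times\mathbb{R}$, let $f\colon\mathbb{R}^n\to(0,\infty)$ be continuous with epigraph $L=\{(x,y)\mid f(x)\le y\}$, and let $K\subset\mathbb{R}^{n+1}$ be a nonempty closed set with $K\cap L=\emptyset$ containing a point $(x_*,y_* )$ with $y_*\le 0$. Then the upper equidistant function $G^+$ associated with $K$ and $L$ is upper semi-continuous and the lower equidistant function $G^-$ is lower semi-continuous on $\mathbb{R}^n$.
   Context: $d(p,A)=\inf\{|p-q|\mid q\in A\}$ (Euclidean distance). $G^+(x)=\sup\{y\in\mathbb{R}\mid d((x,y),K)=d((x,y),L)\}$ and $G^-(x)=\inf\{y\in\mathbb{R}\mid d((x,y),K)=d((x,y),L)\}$ (under the stated assumptions these sets are nonempty and bounded, so $G^\pm(x)$ are real numbers). *)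

(* Defs.v *)
From HB Require Import structures.
From mathcomp Require Import all_boot all_order all_algebra.
From mathcomp Require Import all_classical all_reals all_analysis.
Set Implicit Arguments. Unset Strict Implicit. Unset Printing Implicit Defensive.
Import Order.TTheory GRing.Theory Num.Theory.
Import numFieldNormedType.Exports.
Local Open Scope classical_set_scope.
Local Open Scope ring_scope.

Definition eucl_dist {R : realType} {n : nat} (p q : 'rV[R]_n * R) : R :=
  Num.sqrt (\sum_(i < n) (p.1 ord0 i - q.1 ord0 i) ^+ 2 + (p.2 - q.2) ^+ 2).

Definition dist_set {R : realType} {n : nat} (p : 'rV[R]_n * R)
  (A : set ('rV[R]_n * R)) : R :=
  inf [set eucl_dist p q | q in A].

Definition epigraph {R : realType} {n : nat} (f : 'rV[R]_n -> R)
  : set ('rV[R]_n * R) := [set p | f p.1 <= p.2].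

Definition Gplus {R : realType} {n : nat} (K L : set ('rV[R]_n * R))
  (x : 'rV[R]_n) : R :=
  sup [set y : R | dist_set (x, y) K = dist_set (x, y) L].

Definition Gminus {R : realType} {n : nat} (K L : set ('rV[R]_n * R))
  (x : 'rV[R]_n) : R :=
  inf [set y : R | dist_set (x, y) K = dist_set (x, y) L].

Definition upper_semicont {R : realType} {T : topologicalType} (g : T -> R) :=
  forall x (a : R), g x < a -> \forall z \near x, g z < a.

Definition lower_semicont {R : realType} {T : topologicalType} (g : T -> R) :=
  forall x (a : R), a < g x -> \forall z \near x, a < g z.

(* Main.v *)
Require Import Defs.
From HB Require Import structures.
From mathcomp Require Import all_boot all_order all_algebra.
From mathcomp Require Import all_classical all_reals all_analysis.
From mathcomp Require Import ring lra.
Import Order.TTheory GRing.Theory Num.Theory.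
Import numFieldNormedType.Exports.
Local Open Scope classical_set_scope.
Local Open Scope ring_scope.


Definition Qf {R : realType} {n : nat} (a : 'I_n -> R) (s : R) : R :=
  \sum_(i < n) a i ^+ 2 + s ^+ 2.

Lemma Qf_ge0 {R : realType} {n : nat} (a : 'I_n -> R) s : 0 <= Qf a s.
Proof.
rewrite /Qf; apply: addr_ge0; last exact: sqr_ge0.
by apply: sumr_ge0 => i _; exact: sqr_ge0.
Qed.

Lemma Qf_expand {R : realType} {n : nat} (a b : 'I_n -> R) s t l :
  Qf (fun i => l * a i - b i) (l * s - t) =
  l ^+ 2 * Qf a s - 2 * l * (\sum_(i < n) a i * b i + s * t) + Qf b t.
Proof.
rewrite /Qf.
transitivity (\sum_(i < n) (l ^+ 2 * a i ^+ 2 - 2 * l * (a i * b i) + b i ^+ 2)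
   + (l ^+ 2 * s ^+ 2 - 2 * l * (s * t) + t ^+ 2)).
  by congr (_ + _); [apply: eq_bigr => i _|]; ring.
rewrite !big_split /= sumrN -!mulr_sumr; ring.
Qed.

Lemma CS {R : realType} {n : nat} (a b : 'I_n -> R) s t :
  \sum_(i < n) a i * b i + s * t <= Num.sqrt (Qf a s) * Num.sqrt (Qf b t).
Proof.
set B := (X in X <= _).
have [A0|Apos] := eqVneq (Qf a s) 0.
  have : (\sum_(i < n) a i ^+ 2 == 0) && (s ^+ 2 == 0).
    have sg : 0 <= \sum_(i < n) a i ^+ 2 by apply: sumr_ge0 => i _; exact: sqr_ge0.
    by rewrite -paddr_eq0 ?sqr_ge0 // -/(Qf a s) A0.
  case/andP => /eqP sa /eqP s2.
  have ai : forall i, a i = 0.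
    move=> i; apply/eqP; rewrite -sqrf_eq0.
    move/eqP: sa; rewrite psumr_eq0; last by move=> j _; exact: sqr_ge0.
    by move/allP/(_ i (mem_index_enum _)).
  have -> : B = 0.
    rewrite /B big1; last by move=> i _; rewrite ai mul0r.
    by move/eqP: s2; rewrite sqrf_eq0 => /eqP ->; rewrite mul0r addr0.
  by apply: mulr_ge0; exact: sqrtr_ge0.
have A0 : 0 < Qf a s by rewrite lt0r Apos Qf_ge0.
have h := Qf_ge0 (fun i => (B / Qf a s) * a i - b i) ((B / Qf a s) * s - t).
rewrite Qf_expand -/B in h.
have e : (B / Qf a s) ^+ 2 * Qf a s - 2 * (B / Qf a s) * B + Qf b t
    = (Qf a s * Qf b t - B ^+ 2) / Qf a s.
  by field; rewrite Apos.
rewrite e in h.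
have h2 : B ^+ 2 <= Qf a s * Qf b t.
  rewrite -subr_ge0.
  have -> : Qf a s * Qf b t - B ^+ 2 = (Qf a s * Qf b t - B ^+ 2) / Qf a s * Qf a s.
    by field; rewrite Apos.
  by apply: mulr_ge0 => //; exact: ltW.
rewrite -sqrtrM ?Qf_ge0 //.
apply: (le_trans (ler_norm B)).
by rewrite -sqrtr_sqr ler_sqrt // mulr_ge0 ?Qf_ge0.
Qed.

Lemma Mink {R : realType} {n : nat} (a b : 'I_n -> R) s t :
  Num.sqrt (Qf (fun i => a i + b i) (s + t)) <= Num.sqrt (Qf a s) + Num.sqrt (Qf b t).
Proof.
have e : Qf (fun i => a i + b i) (s + t) =
   Qf a s + 2 * (\sum_(i < n) a i * b i + s * t) + Qf b t.
  rewrite /Qf.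
  transitivity (\sum_(i < n) (a i ^+ 2 + 2 * (a i * b i) + b i ^+ 2)
   + (s ^+ 2 + 2 * (s * t) + t ^+ 2)).
    by congr (_ + _); [apply: eq_bigr => i _|]; ring.
  rewrite !big_split /= -!mulr_sumr; ring.
have hc := CS a b s t.
have ha := sqr_sqrtr (Qf_ge0 a s). have hb := sqr_sqrtr (Qf_ge0 b t).
rewrite -[leRHS]ger0_norm ?addr_ge0 ?sqrtr_ge0 // -sqrtr_sqr ler_sqrt ?sqr_ge0 //.
rewrite e.
set x := Num.sqrt (Qf a s) in ha hc *. set y := Num.sqrt (Qf b t) in hb hc *.
rewrite -ha -hb. set C := (\sum_(i < n) a i * b i + s * t) in hc *.
have -> : (x + y) ^+ 2 = x ^+ 2 + 2 * (x * y) + y ^+ 2 by ring.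
by rewrite lerD2r lerD2l ler_pM2l.
Qed.

Section S.
Context {R : realType} {n : nat}.
Implicit Types p q r : 'rV[R]_n * R.

Lemma euclE p q : eucl_dist p q = Num.sqrt (Qf (fun i => p.1 ord0 i - q.1 ord0 i) (p.2 - q.2)).
Proof. by []. Qed.

Lemma eucl_ge0 p q : 0 <= eucl_dist p q.
Proof. exact: sqrtr_ge0. Qed.

Lemma eucl_sym p q : eucl_dist p q = eucl_dist q p.
Proof.
rewrite !euclE /Qf; congr (Num.sqrt (_ + _)); last by rewrite -sqrrN opprB.
by apply: eq_bigr => i _; rewrite -sqrrN opprB.
Qed.

Lemma eucl_tri p q r : eucl_dist p r <= eucl_dist p q + eucl_dist q r.
Proof.
rewrite !euclE.
have -> : Qf (fun i => p.1 ord0 i - r.1 ord0 i) (p.2 - r.2) =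
  Qf (fun i => (p.1 ord0 i - q.1 ord0 i) + (q.1 ord0 i - r.1 ord0 i)) ((p.2 - q.2) + (q.2 - r.2)).
  rewrite /Qf; congr (_ + _); last by congr (_ ^+ 2); ring.
  by apply: eq_bigr => i _; congr (_ ^+ 2); ring.
exact: Mink.
Qed.

Lemma eucl_vert (x : 'rV[R]_n) y y' : eucl_dist (x, y) (x, y') = `|y - y'|.
Proof.
rewrite euclE /Qf big1 ?add0r ?sqrtr_sqr //= => i _.
by rewrite subrr expr0n.
Qed.

Lemma eucl_coord2 p q : `|p.2 - q.2| <= eucl_dist p q.
Proof.
rewrite euclE -sqrtr_sqr ler_sqrt ?Qf_ge0 // /Qf lerDr.
by apply: sumr_ge0 => i _; exact: sqr_ge0.
Qed.

Lemma eucl_coord1 p q i : `|p.1 ord0 i - q.1 ord0 i| <= eucl_dist p q.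
Proof.
rewrite euclE -sqrtr_sqr ler_sqrt ?Qf_ge0 // /Qf.
rewrite -[X in X <= _]addr0; apply: lerD; last exact: sqr_ge0.
rewrite (bigD1 i) //= lerDl.
by apply: sumr_ge0 => j _; exact: sqr_ge0.
Qed.

Lemma eucl_sq (z x : 'rV[R]_n) y y' :
  eucl_dist (z, y) (x, y') ^+ 2 = eucl_dist (z, 0) (x, 0) ^+ 2 + (y - y') ^+ 2.
Proof.
rewrite !euclE !sqr_sqrtr ?Qf_ge0 // /Qf /= subrr expr0n /= addr0.
by [].
Qed.

Lemma eucl_small p q e : 0 <= e -> (forall i, `|p.1 ord0 i - q.1 ord0 i| <= e) ->
  `|p.2 - q.2| <= e -> eucl_dist p q <= n.+1%:R * e.
Proof.
move=> e0 h1 h2.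
rewrite euclE -[leRHS]ger0_norm ?mulr_ge0 // -sqrtr_sqr ler_sqrt ?sqr_ge0 //.
apply: (@le_trans _ _ (n.+1%:R * e ^+ 2)).
  have -> : n.+1%:R = n%:R + 1 :> R by rewrite -natr1.
rewrite /Qf mulrDl mul1r; apply: lerD.
    have -> : n%:R * e ^+ 2 = \sum_(i < n) e ^+ 2 by rewrite sumr_const card_ord mulr_natl.
    apply: ler_sum => i _; rewrite -real_normK ?num_real //.
    by rewrite lerXn2r ?nnegrE ?normr_ge0 //.
  by rewrite -real_normK ?num_real // lerXn2r ?nnegrE ?normr_ge0.
rewrite exprMn ler_wpM2r ?sqr_ge0 //.
rewrite expr2 ler_peMr ?ler0n // ler1n //.
Qed.

End S.

Section S.
Context {R : realType} {n : nat}.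
Implicit Types p q r : 'rV[R]_n * R.
Implicit Types A : set ('rV[R]_n * R).

Lemma ds_hlb p A : has_lbound [set eucl_dist p q | q in A].
Proof. by exists 0 => _ [q _ <-]; exact: eucl_ge0. Qed.

Lemma ds_le p A q : A q -> dist_set p A <= eucl_dist p q.
Proof. by move=> Aq; apply: ge_inf; [exact: ds_hlb | exists q]. Qed.

Lemma ds_glb p A b : A !=set0 -> (forall q, A q -> b <= eucl_dist p q) -> b <= dist_set p A.
Proof.
move=> [q0 Aq0] h; apply: lb_le_inf; first by exists (eucl_dist p q0), q0.
by move=> _ [q Aq <-]; exact: h.
Qed.

Lemma ds_ge0 p A : A !=set0 -> 0 <= dist_set p A.
Proof. by move=> A0; apply: ds_glb => // q _; exact: eucl_ge0. Qed.

Lemma ds_lip p q A : A !=set0 -> dist_set p A <= dist_set q A + eucl_dist p q.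
Proof.
move=> A0; rewrite -lerBlDr; apply: ds_glb => // r Ar.
rewrite lerBlDr addrC; exact: le_trans (ds_le p _ _ Ar) (eucl_tri p q r).
Qed.

Lemma ds_lip2 p q A : A !=set0 -> `|dist_set p A - dist_set q A| <= eucl_dist p q.
Proof.
move=> A0; have h1 := ds_lip p q A A0; have h2 := ds_lip q p A A0.
rewrite eucl_sym in h2; rewrite ler_norml; apply/andP; split; lra.
Qed.

Lemma ds_self p A : A p -> dist_set p A = 0.
Proof.
move=> Ap; apply/eqP; rewrite eq_le ds_ge0 ?andbT; last by exists p.
apply: le_trans (ds_le p _ _ Ap) _.
by rewrite euclE /Qf big1 ?subrr ?expr0n ?add0r ?sqrtr0 //= => i _; rewrite subrr expr0n.
Qed.

End S.

Lemma sqrt_le_of {R : realType} (X u : R) : 0 <= u -> X <= u ^+ 2 -> Num.sqrt X <= u.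
Proof. by move=> u0 h; rewrite -[u]ger0_norm // -sqrtr_sqr ler_sqrt // sqr_ge0. Qed.

Lemma sqrt_lt_of {R : realType} (X u : R) : 0 <= u -> u ^+ 2 < X -> u < Num.sqrt X.
Proof.
move=> u0 h; rewrite -[u]ger0_norm // -sqrtr_sqr ltr_sqrt //.
by apply: le_lt_trans h; apply: sqr_ge0.
Qed.

Lemma sqrt_ge_of {R : realType} (X u : R) : 0 <= u -> u ^+ 2 <= X -> u <= Num.sqrt X.
Proof.
move=> u0 h; rewrite -[u]ger0_norm // -sqrtr_sqr ler_sqrt //.
by apply: le_trans h; exact: sqr_ge0.
Qed.

Lemma lip_cont {R : realType} (g : R -> R) k : 0 <= k ->
  (forall y y', `|g y - g y'| <= k * `|y - y'|) -> continuous g.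
Proof.
move=> k0 h y; apply/(@cvgrPdist_lt _ _ _ (nbhs y) _ g) => e e0.
have k1 : 0 < k + 1 by lra.
have := (cvgrPdist_lt _ _).1 (@cvg_id _ (nbhs y)) (e / (k + 1)) (divr_gt0 e0 k1).
move=> /(_ _) H; apply: filterS H => t ht.
apply: le_lt_trans (h y t) _.
apply: (@le_lt_trans _ _ ((k + 1) * `|y - t|)).
  by rewrite ler_wpM2r // ?normr_ge0 //; lra.
by rewrite -ltr_pdivlMl // mulrC.
Qed.

Lemma f_lb {R : realType} {n : nat} (f : 'rV[R]_n -> R) (x0 : 'rV[R]_n) (rho : R) :
  continuous f -> (forall x, 0 < f x) -> 0 <= rho ->
  exists2 c : R, 0 < c & forall x : 'rV[R]_n, (forall i, `|x ord0 i - x0 ord0 i| <= rho) -> c <= f x.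
Proof.
move=> hf fpos rho0.
pose B := [set v : 'rV[R]_n | forall i,
   (`[x0 ord0 i - rho, x0 ord0 i + rho]%classic) (v ord0 i)].
have cB : compact B.
  apply: (@rV_compact _ _ (fun i => `[x0 ord0 i - rho, x0 ord0 i + rho]%classic)).
  by move=> i; exact: segment_compact.
have B0 : B !=set0.
  by exists x0 => i /=; rewrite in_itv /=; apply/andP; split; lra.
have [c cB' hc] := EVT_min_rV B0 cB (continuous_subspaceT hf).
exists (f c) => // x hx; apply: hc; rewrite inE => i /=.
have := hx i; rewrite ler_norml => /andP [h1 h2].
by rewrite in_itv /=; apply/andP; split; lra.
Qed.

Section G.
Context {R : realType} {n : nat} (f : 'rV[R]_n -> R) (K : set ('rV[R]_n * R)).
Context (hf : continuous f) (fpos : forall x, 0 < f x) (hK : closed K)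
  (K0 : K !=set0) (hKL : K `&` epigraph f = set0)
  (xs : 'rV[R]_n) (ys : R) (Ks : K (xs, ys)) (ys0 : ys <= 0).

Let L := epigraph f.
Let L0 : L !=set0. Proof. by exists (xs, f xs); rewrite /L /epigraph /=. Qed.

Definition hh (z : 'rV[R]_n) (y : R) := dist_set (z, y) K - dist_set (z, y) L.

Lemma eucl_hor (z x : 'rV[R]_n) y : eucl_dist (z, y) (x, y) = eucl_dist (z, 0) (x, 0).
Proof. by rewrite !euclE /= !subrr. Qed.

Lemma eucl_self (z : 'rV[R]_n) y : eucl_dist (z, y) (z, y) = 0.
Proof. by rewrite eucl_vert subrr normr0. Qed.

Lemma hh_lip_y z y y' : `|hh z y - hh z y'| <= 2 * `|y - y'|.
Proof.
rewrite /hh.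
have h1 := ds_lip2 (z, y) (z, y') K K0. have h2 := ds_lip2 (z, y) (z, y') L L0.
rewrite eucl_vert in h1 h2.
have -> : dist_set (z, y) K - dist_set (z, y) L - (dist_set (z, y') K - dist_set (z, y') L)
  = (dist_set (z, y) K - dist_set (z, y') K) - (dist_set (z, y) L - dist_set (z, y') L) by ring.
apply: le_trans (ler_normB _ _) _; lra.
Qed.

Lemma hh_lip_x z x y : `|hh z y - hh x y| <= 2 * eucl_dist (z, 0) (x, 0).
Proof.
rewrite /hh.
have h1 := ds_lip2 (z, y) (x, y) K K0. have h2 := ds_lip2 (z, y) (x, y) L L0.
rewrite eucl_hor in h1 h2.
have -> : dist_set (z, y) K - dist_set (z, y) L - (dist_set (x, y) K - dist_set (x, y) L)
  = (dist_set (z, y) K - dist_set (x, y) K) - (dist_set (z, y) L - dist_set (x, y) L) by ring.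
apply: le_trans (ler_normB _ _) _; lra.
Qed.

Lemma hh_cont z : continuous (hh z).
Proof. by apply: (@lip_cont _ _ 2) => //; exact: hh_lip_y. Qed.

Lemma hh_posL z y : f z <= y -> 0 < hh z y.
Proof.
move=> fzy.
have Lp : L (z, y) by [].
have nK : (~` K) (z, y).
  move=> Kp; have : (K `&` epigraph f) (z, y) by [].
  by rewrite hKL.
have := closed_openC hK; rewrite openE => /(_ _ nK) /nbhs_ballP [e e0 be].
rewrite /hh (ds_self (z, y) L) // subr0.
apply: (lt_le_trans e0); apply: ds_glb => // q Kq.
rewrite leNgt; apply/negP => hq.
apply: (be q) => //.
split => /=.
  split => // i j; rewrite (ord1 i) /ball /=.
  exact: le_lt_trans (eucl_coord1 (z, y) q j) hq.
by rewrite /ball /=; exact: le_lt_trans (eucl_coord2 (z, y) q) hq.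
Qed.

Lemma neg_region x0 : exists N : R, forall (z : 'rV[R]_n) (y : R),
  eucl_dist (z, 0) (x0, 0) <= 1 -> y <= - N -> hh z y < 0.
Proof.
pose D := eucl_dist (x0, 0) (xs, 0) + 1.
have D1 : 1 <= D by rewrite /D lerDr eucl_ge0.
pose rho := D + 2.
have rho0 : 0 <= rho by rewrite /rho; lra.
have [c c0 hc] := f_lb f x0 rho hf fpos rho0.
pose t := (D ^+ 2 + 1) / (2 * c).
have ht : t * (2 * c) = D ^+ 2 + 1 by rewrite /t; field; lra.
exists (Num.max (- ys) t) => z y hz hy.
have hy1 : y <= ys.
  have : - ys <= Num.max (- ys) t by rewrite le_max lexx.
  lra.
have hy2 : t <= - y.
  have : t <= Num.max (- ys) t by rewrite le_max lexx orbT.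
  lra.
have hyc : D ^+ 2 + 1 <= - 2 * y * c by nra.
pose X := D ^+ 2 + 1 + y ^+ 2.
have ez : eucl_dist (z, 0) (xs, 0) <= D.
  apply: le_trans (eucl_tri _ (x0, 0) _) _; rewrite /D; lra.
have ez0 := eucl_ge0 (z, 0) (xs, 0).
have hK1 : dist_set (z, y) K < Num.sqrt X.
  apply: le_lt_trans (ds_le (z, y) _ _ Ks) _.
  apply: sqrt_lt_of; first exact: eucl_ge0.
  rewrite eucl_sq /X.
  set ez' := eucl_dist (z, 0) (xs, 0) in ez ez0 *.
  have h1 : ez' ^+ 2 <= D ^+ 2 by rewrite lerXn2r // ?nnegrE //; lra.
  have h2 : (y - ys) ^+ 2 <= y ^+ 2.
    have -> : (y - ys) ^+ 2 = y ^+ 2 + ys * (ys - 2 * y) by ring.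
    have hh3 : ys <= 0 := ys0. have hh4 : y <= ys := hy1. have hh2 : 0 <= ys - 2 * y by lra.
    rewrite gerDl; exact: mulr_le0_ge0.
  lra.
have hL1 : Num.sqrt X <= dist_set (z, y) L.
  apply: ds_glb => //= -[x' y'] /= Lq.
  have fx' := fpos x'.
  rewrite /L /epigraph /= in Lq.
  apply: sqrt_le_of; first exact: eucl_ge0.
  rewrite eucl_sq.
  have e0 := eucl_ge0 (z, 0) (x', 0).
  set e' := eucl_dist (z, 0) (x', 0) in e0 *.
  have [big|small] := leP (D ^+ 2 + 1) (e' ^+ 2).
    rewrite /X; nra.
  have e'D : e' < D + 1 by nra.
  have cx : c <= f x'.
    apply: hc => i.
    apply: le_trans (eucl_coord1 (x', 0) (x0, 0) i) _.
    apply: le_trans (eucl_tri _ (z, 0) _) _.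
    rewrite eucl_sym -/e' /rho; lra.
  rewrite /X; nra.
rewrite /hh; lra.
Qed.

Lemma eucl_self0 (z : 'rV[R]_n) : eucl_dist (z, 0) (z, 0) = 0.
Proof. exact: eucl_self. Qed.

Lemma S_nonempty z : exists y, hh z y = 0.
Proof.
have [N hN] := neg_region z.
have hneg : hh z (- N) < 0 by apply: hN; rewrite ?eucl_self0.
have hpos : 0 < hh z (f z) by apply: hh_posL.
have ab : - N <= f z.
  rewrite leNgt; apply/negP => abs.
  have := hh_posL _ _ (ltW abs); lra.
have hv : Num.min (hh z (- N)) (hh z (f z)) <= 0 <= Num.max (hh z (- N)) (hh z (f z)).
  apply/andP; split.
    by rewrite ge_min; apply/orP; left; exact: ltW.
  by rewrite le_max; apply/orP; right; exact: ltW.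
have [c _ hc] := IVT ab (continuous_subspaceT (hh_cont z)) hv.
by exists c.
Qed.

Lemma S_ub z y : hh z y = 0 -> y < f z.
Proof.
move=> h0; rewrite ltNge; apply/negP => fy.
by have := hh_posL _ _ fy; rewrite h0 ltxx.
Qed.

Lemma near_eucl (x : 'rV[R]_n) (d : R) : 0 < d ->
  \forall z \near x, eucl_dist (z, 0) (x, 0) < d.
Proof.
move=> d0.
have n0 : 0 < (n.+1%:R : R) by rewrite ltr0n.
pose e := d / (2 * n.+1%:R).
have e0 : 0 < e by rewrite /e divr_gt0 // mulr_gt0.
have := nbhsx_ballx x e e0; apply: filterS => z bz.
have ez : eucl_dist (z, 0) (x, 0) <= n.+1%:R * e.
  apply: eucl_small; first exact: ltW.
    move=> i /=; case: bz => _ /(_ ord0 i); rewrite /ball /= distrC => h; exact: ltW.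
  by rewrite /= subrr normr0 ltW.
apply: le_lt_trans ez _.
have -> : n.+1%:R * e = d / 2 by rewrite /e; field; rewrite gt_eqF.
lra.
Qed.

Let S (z : 'rV[R]_n) := [set y : R | dist_set (z, y) K = dist_set (z, y) L].

Lemma S_hh z y : S z y <-> hh z y = 0.
Proof. by rewrite /S /hh /=; split => [->|/eqP]; [rewrite subrr | rewrite subr_eq0 => /eqP]. Qed.

Lemma S0 z : S z !=set0.
Proof. by have [y hy] := S_nonempty z; exists y; apply/S_hh. Qed.

Lemma main_usc x a : Gplus K L x < a -> \forall z \near x, Gplus K L z < a.
Proof.
rewrite /Gplus -/(S x) => ga.
set g := sup (S x) in ga.
pose a' := (g + a) / 2.
have ga' : g < a' by rewrite /a'; lra.
have a'a : a' < a by rewrite /a'; lra.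
have hub : has_ubound (S x).
  by exists (f x) => y /S_hh /S_ub /ltW.
have claim1 : forall y, a' <= y -> 0 < hh x y.
  move=> y ay.
  have nS : ~ S x y.
    move=> Sy; have := ub_le_sup hub Sy; rewrite -/g; lra.
  have [hy|hy] := ltP 0 (hh x y); first by [].
  exfalso.
  have [fy|fy] := leP (f x) y.
    by have := hh_posL _ _ fy; lra.
  have hv : Num.min (hh x y) (hh x (f x)) <= 0 <= Num.max (hh x y) (hh x (f x)).
    apply/andP; split.
      by rewrite ge_min hy.
    by rewrite le_max; apply/orP; right; exact: ltW (hh_posL _ _ (lexx _)).
  have [c cI hc] := IVT (ltW fy) (continuous_subspaceT (hh_cont x)) hv.
  move: cI; rewrite in_itv /= => /andP [c1 c2].
  have Sc : S x c by apply/S_hh.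
  have := ub_le_sup hub Sc; rewrite -/g; lra.
pose M := Num.max (f x + 1) a'.
have aM : a' <= M by rewrite /M le_max lexx orbT.
have M1 : f x + 1 <= M by rewrite /M le_max lexx.
have [c0 c0I hc0] := EVT_min aM (continuous_subspaceT (hh_cont x)).
have d0 : 0 < hh x c0.
  by apply: claim1; move: c0I; rewrite in_itv /= => /andP [].
have H1 : \forall z \near x, `|f x - f z| < 1.
  exact: (cvgrPdist_lt _ _).1 (hf x) 1 ltr01.
have H2 := near_eucl x _ (divr_gt0 d0 (ltr0n _ 2)).
apply: filterS2 H1 H2 => z hz1 hz2.
rewrite /Gplus -/(S z).
apply: le_lt_trans a'a; apply: ge_sup; first exact: S0.
move=> y /S_hh hy0.
rewrite leNgt; apply/negP => ay.
have [yM|yM] := leP y M.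
  have yI : y \in `[a', M] by rewrite in_itv /= (ltW ay) yM.
  have := hc0 _ yI.
  have := hh_lip_x z x y; rewrite hy0 sub0r normrN => hl.
  have := ler_norm (hh x y).
  lra.
have fz : f z <= y.
  move: hz1; rewrite ltr_norml => /andP [h1 h2].
  have h3 : f x + 1 <= M := M1.
  lra.
by have := hh_posL _ _ fz; rewrite hy0 ltxx.
Qed.

Lemma main_lsc x a : a < Gminus K L x -> \forall z \near x, a < Gminus K L z.
Proof.
rewrite /Gminus -/(S x) => ga.
set g := inf (S x) in ga.
pose a' := (a + g) / 2.
have ga' : a' < g by rewrite /a'; lra.
have a'a : a < a' by rewrite /a'; lra.
have [N hN] := neg_region x.
have hNx : forall y, y <= - N -> hh x y < 0.
  by move=> y hy; apply: hN => //; rewrite eucl_self.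
have hlb : has_lbound (S x).
  exists (- N) => y /S_hh hy0.
  rewrite leNgt; apply/negP => hy.
  by have := hNx _ (ltW hy); rewrite hy0 ltxx.
have claim1 : forall y, y <= a' -> hh x y < 0.
  move=> y ay.
  have nS : ~ S x y.
    move=> Sy; have := ge_inf hlb Sy; rewrite -/g; lra.
  have [hy|hy] := ltP (hh x y) 0; first by [].
  exfalso.
  have [yN|yN] := leP y (- N).
    by have := hNx _ yN; lra.
  have hv : Num.min (hh x (- N)) (hh x y) <= 0 <= Num.max (hh x (- N)) (hh x y).
    apply/andP; split.
      by rewrite ge_min; apply/orP; left; exact: ltW (hNx _ (lexx _)).
    by rewrite le_max hy orbT.
  have [c cI hc] := IVT (ltW yN) (continuous_subspaceT (hh_cont x)) hv.
  move: cI; rewrite in_itv /= => /andP [c1 c2].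
  have Sc : S x c by apply/S_hh.
  have := ge_inf hlb Sc; rewrite -/g; lra.
pose m := Num.min (- N) a'.
have ma : m <= a' by rewrite /m ge_min lexx orbT.
have mN : m <= - N by rewrite /m ge_min lexx.
have [c0 c0I hc0] := EVT_max ma (continuous_subspaceT (hh_cont x)).
have d0 : 0 < - hh x c0.
  rewrite oppr_gt0; apply: claim1; move: c0I; rewrite in_itv /= => /andP [].
  by [].
have H1 := near_eucl x _ ltr01.
have H2 := near_eucl x _ (divr_gt0 d0 (ltr0n _ 2)).
apply: filterS2 H1 H2 => z hz1 hz2.
rewrite /Gminus -/(S z).
apply: lt_le_trans a'a _; apply: lb_le_inf; first exact: S0.
move=> y /S_hh hy0.
rewrite leNgt; apply/negP => ay.
have [yN|yN] := leP y (- N).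
  by have := hN z y (ltW hz1) yN; rewrite hy0 ltxx.
have yI : y \in `[m, a'] by rewrite in_itv /= (ltW ay) andbT (le_trans mN (ltW yN)).
have := hc0 _ yI.
have := hh_lip_x z x y; rewrite hy0 sub0r normrN => hl.
have := ler_norm (- hh x y); rewrite normrN.
lra.
Qed.

End G.

Theorem corollary4 (R : realType) (n : nat) (f : 'rV[R]_n -> R)
  (K : set ('rV[R]_n * R)) :
  (1 <= n)%N ->
  continuous f ->
  (forall x, 0 < f x) ->
  closed K ->
  K !=set0 ->
  K `&` epigraph f = set0 ->
  (exists p, K p /\ p.2 <= 0) ->
  upper_semicont (Gplus K (epigraph f)) /\
  lower_semicont (Gminus K (epigraph f)).
Proof.
move=> _ hf fpos hK K0 hKL [[xs ys] [Ks ys0]]; split.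
  by move=> x a h; exact: (main_usc f K hf fpos hK K0 hKL xs ys Ks ys0 x a h).
by move=> x a h; exact: (main_lsc f K hf fpos hK K0 hKL xs ys Ks ys0 x a h).
Qed.
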